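(* Let $g$ be the Lorentzian form on $\mathbb{R}^4$ with matrix $\mathrm{diag}(1,1,1,-c^2)$, $\mathcal{L}^{\uparrow}_+$ its proper orthochronous Lorentz group, and $u$ a timelike vector. Let $H(u)=\{L\in\mathcal{L}^{\uparrow}_+ : Lu=u\}$ and let $(\mathcal{P}^{\uparrow}_+)_X$ be the group of maps $x\mapsto Lx+b$ with $L\in H(u)$, $b\in\mathbb{R}^4$. Let $CH(u)$ be the set of $M\in\mathbb{R}^+\mathcal{L}^{\uparrow}_+=\{\mu L:\mu>0, L\in\mathcal{L}^{\uparrow}_+\}$ with $M(\langle u\rangle)=\langle u\rangle$, where $\langle u\rangle$ is the line spanned by $u$, and let $C(\mathcal{P}^{\uparrow}_+)_X$ be the group of maps $x\mapsto Mx+b$ with $M\in CH(u)$, $b\in\mathbb{R}^4$. Let $\langle u\rangle^\perp=\{v: g(v,u)=0\}$. (A) An equivalence relation on $\mathbb{R}^4$ is $(\mathcal{P}^{\uparrow}_+)_X$-invariant if and only if there is an additive subgroup $H$ of $\mathbb{R}$ such that either (i) $[x]=x+Hu$ for all $x$, or (ii) $[x]=x+(\langle u\rangle^\perp+Hu)$ for all $x$. (B) The standard synchrony $R_u$, defined by $x\,R_u\,y\iff g(x-y,u)=0$, is the only nontrivial $C(\mathcal{P}^{\uparrow}_+)_X$-invariant equivalence relation on $\mathbb{R}^4$ whose equivalence classes are not worldlines (i.e. not the lines $x+\mathbb{R}u$).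
   Context: An equivalence relation is invariant under a group of transformations if $x\sim y$ implies $h(x)\sim h(y)$ for all $x,y$ and all $h$ in the group. It is trivial if it is the total relation or the identity relation (diagonal). A vector $u$ is timelike if $g(u,u)<0$. *)

(* Defs.v *)
From HB Require Import structures.
From mathcomp Require Import all_boot all_order all_algebra.
From mathcomp Require Import reals.
Set Implicit Arguments. Unset Strict Implicit. Unset Printing Implicit Defensive.
Import Order.TTheory GRing.Theory Num.Theory.
Local Open Scope ring_scope.

Section Defs.
Variable R : realType.
Notation vec := 'cV[R]_4.

(* matrix diag(1,1,1,-c^2); index ord_max (= 3) is the time coordinate *)
Definition lorentz_mx (c : R) : 'M[R]_4 :=
  diag_mx (\row_(i < 4) (if i == ord_max then - c ^+ 2 else 1)).

Definition lg (c : R) (x y : vec) : R := (x^T *m lorentz_mx c *m y) 0 0.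

Definition timelike (c : R) (u : vec) : Prop := lg c u u < 0.

Definition proper_orthochronous (c : R) (L : 'M[R]_4) : Prop :=
  L^T *m lorentz_mx c *m L = lorentz_mx c /\ \det L = 1 /\ 0 < L ord_max ord_max.

Definition stabH (c : R) (u : vec) (L : 'M[R]_4) : Prop :=
  proper_orthochronous c L /\ L *m u = u.

Definition PX (c : R) (u : vec) (f : vec -> vec) : Prop :=
  exists L, stabH c u L /\ exists b : vec, forall x, f x = L *m x + b.

Definition span_line (u : vec) (y : vec) : Prop := exists t : R, y = t *: u.

Definition CH (c : R) (u : vec) (M : 'M[R]_4) : Prop :=
  (exists mu : R, 0 < mu /\ exists L, proper_orthochronous c L /\ M = mu *: L) /\
  (forall y, (exists v, span_line u v /\ y = M *m v) <-> span_line u y).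

Definition CPX (c : R) (u : vec) (f : vec -> vec) : Prop :=
  exists M, CH c u M /\ exists b : vec, forall x, f x = M *m x + b.

Definition is_equivalence (E : vec -> vec -> Prop) : Prop :=
  (forall x, E x x) /\ (forall x y, E x y -> E y x) /\
  (forall x y z, E x y -> E y z -> E x z).

Definition invariant_rel (G : (vec -> vec) -> Prop) (E : vec -> vec -> Prop) : Prop :=
  forall h, G h -> forall x y, E x y -> E (h x) (h y).

Definition trivial_rel (E : vec -> vec -> Prop) : Prop :=
  (forall x y, E x y) \/ (forall x y, E x y <-> x = y).

Definition additive_subgroup (H : R -> Prop) : Prop :=
  H 0 /\ (forall a b, H a -> H b -> H (a - b)).

Definition worldline_rel (u : vec) (E : vec -> vec -> Prop) : Prop :=
  forall x y, E x y <-> exists t : R, y = x + t *: u.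

Definition synchrony (c : R) (u : vec) (x y : vec) : Prop := lg c (x - y) u = 0.

End Defs.

(* Main.v *)
Require Import Defs.
From HB Require Import structures.
From mathcomp Require Import all_boot all_order all_algebra.
From mathcomp Require Import reals ring lra zify.
From Stdlib Require Import Classical.
Import Order.TTheory GRing.Theory Num.Theory.
Local Open Scope ring_scope.
Lemma det_rank1 (R : comPzRingType) n (c0 : 'cV[R]_n) (r : 'rV[R]_n) :
  \det (1%:M + c0 *m r) = 1 + (r *m c0) 0 0.
Proof.
have E : block_mx 1%:M 0 r 1%:M *m block_mx (1%:M + c0 *m r) c0 0 1%:M
          *m block_mx 1%:M 0 (-r) 1%:M = block_mx 1%:M c0 0 (1%:M + r *m c0) :> 'M[R]_(n + 1).
  rewrite !mulmx_block !(mul1mx, mulmx1, mul0mx, mulmx0, addr0, add0r).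
  rewrite !mulmxN mulmxDr mulmxDl mulmx1 mul1mx mulmxA.
  by rewrite addrK [r *m c0 *m r + r]addrC subrr [r *m c0 + _]addrC.
move: (congr1 determinant E).
rewrite !det_mulmx det_lblock det_ublock !det_ublock !det1 !mul1r mulr1 det_mx11.
rewrite det_lblock !det1 !mulr1 => H; by rewrite -[LHS]mulr1 H !mxE eqxx /= mulr1n mulr1.
Qed.

Section S.
Variable R : realType.
Variable c : R.
Notation vec := 'cV[R]_4.
Definition i0 : 'I_4 := Ordinal (isT : (0 < 4)%N).
Definition i1 : 'I_4 := Ordinal (isT : (1 < 4)%N).
Definition i2 : 'I_4 := Ordinal (isT : (2 < 4)%N).
Definition i3 : 'I_4 := Ordinal (isT : (3 < 4)%N).

Lemma lg_coord (x y : vec) : lg c x y =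
  x i0 0 * y i0 0 + x i1 0 * y i1 0 + x i2 0 * y i2 0 - c^+2 * (x i3 0 * y i3 0).
Proof.
rewrite /lg /lorentz_mx mul_mx_diag !mxE !big_ord_recr big_ord0 /= !mxE /=.
have -> : (ord_max : 'I_4) = i3 by apply/val_inj.
have -> : widen_ord (leqnSn 3) (widen_ord (leqnSn 2) (widen_ord (leqnSn 1) (ord_max : 'I_1))) = i0 by apply/val_inj.
have -> : widen_ord (leqnSn 3) (widen_ord (leqnSn 2) (ord_max : 'I_2)) = i1 by apply/val_inj.
have -> : widen_ord (leqnSn 3) (ord_max : 'I_3) = i2 by apply/val_inj.
ring.
Qed.

Notation G := (lorentz_mx c).
Lemma lagrange (a0 a1 a2 u0 u1 u2 : R) :
  (a0*u0+a1*u1+a2*u2)^+2 <= (a0^+2+a1^+2+a2^+2)*(u0^+2+u1^+2+u2^+2).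
Proof.
have H : (a0^+2+a1^+2+a2^+2)*(u0^+2+u1^+2+u2^+2) - (a0*u0+a1*u1+a2*u2)^+2
  = (a0*u1-a1*u0)^+2 + (a0*u2-a2*u0)^+2 + (a1*u2-a2*u1)^+2 by ring.
rewrite -subr_ge0 H. by rewrite !addr_ge0 // sqr_ge0.
Qed.

Lemma orth_scalar (k a0 a1 a2 a3 u0 u1 u2 u3 : R) : 0 < k ->
  a0*a0+a1*a1+a2*a2 - k^+2*(a3*a3) = - k^+2 ->
  u0*u0+u1*u1+u2*u2 - k^+2*(u3*u3) < 0 ->
  a0*u0+a1*u1+a2*u2 - k^+2*(a3*u3) = - k^+2 * u3 -> 0 < a3.
Proof.
move=> hc ha hu hau.
have L := lagrange a0 a1 a2 u0 u1 u2.
set A := a0^+2+a1^+2+a2^+2 in L. set U := u0^+2+u1^+2+u2^+2 in L.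
set p := a0*u0+a1*u1+a2*u2 in L hau.
have hA : A = k^+2*(a3*a3) - k^+2 by rewrite /A; lra.
have hU : U < k^+2*(u3*u3) by rewrite /U; lra.
have hp : p = k^+2 * u3 * (a3 - 1) by lra.
have A0 : 0 <= A by rewrite /A !addr_ge0 // sqr_ge0.
have U0 : 0 <= U by rewrite /U !addr_ge0 // sqr_ge0.
have c2 : 0 < k^+2 by rewrite exprn_gt0.
have u3n : 0 < u3 * u3 by nra.
rewrite ltNge; apply/negP => a3le.
have : p^+2 <= A * (k^+2 * (u3*u3)) by nra.
rewrite hp hA.
have kk : 0 < k^+2 * k^+2 * (u3*u3) by nra.
nra.
Qed.

Lemma posdef_scalar (k v0 v1 v2 v3 u0 u1 u2 u3 : R) : 0 < k ->
  u0*u0+u1*u1+u2*u2 - k^+2*(u3*u3) < 0 ->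
  v0*u0+v1*u1+v2*u2 - k^+2*(v3*u3) = 0 ->
  v0*v0+v1*v1+v2*v2 - k^+2*(v3*v3) <= 0 -> v0 = 0 /\ v1 = 0 /\ v2 = 0 /\ v3 = 0.
Proof.
move=> hc hu hvu hvv.
have L := lagrange v0 v1 v2 u0 u1 u2.
set A := v0^+2+v1^+2+v2^+2 in L. set U := u0^+2+u1^+2+u2^+2 in L.
set p := v0*u0+v1*u1+v2*u2 in L hvu.
have A0 : 0 <= A by rewrite /A !addr_ge0 // sqr_ge0.
have U0 : 0 <= U by rewrite /U !addr_ge0 // sqr_ge0.
have c2 : 0 < k^+2 by rewrite exprn_gt0.
have hU : U < k^+2*(u3*u3) by rewrite /U; lra.
have hA : A <= k^+2*(v3*v3) by rewrite /A; lra.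
have hp : p = k^+2*(v3*u3) by lra.
have v30 : v3 = 0.
  case: (ltrgt0P v3) => // h.
  - have h2 : 0 < v3 * v3 by nra.
    have : p^+2 <= k^+2*(v3*v3) * U.
      by apply: (le_trans L); rewrite ler_wpM2r.
    have : k^+2*(v3*v3)*U < k^+2*(v3*v3)*(k^+2*(u3*u3)) by rewrite ltr_pM2l // mulr_gt0.
    rewrite hp; move=> h3 h4.
    have : (k ^+ 2 * (v3 * u3)) ^+ 2 = k^+2*(v3*v3)*(k^+2*(u3*u3)) by ring.
    lra.
  - have h2 : 0 < v3 * v3 by nra.
    have : p^+2 <= k^+2*(v3*v3) * U.
      by apply: (le_trans L); rewrite ler_wpM2r.
    have : k^+2*(v3*v3)*U < k^+2*(v3*v3)*(k^+2*(u3*u3)) by rewrite ltr_pM2l // mulr_gt0.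
    rewrite hp; move=> h3 h4.
    have : (k ^+ 2 * (v3 * u3)) ^+ 2 = k^+2*(v3*v3)*(k^+2*(u3*u3)) by ring.
    lra.
have A00 : A = 0 by rewrite v30 in hA; lra.
move: A00; rewrite /A => A00.
have s0 := sqr_ge0 v0; have s1 := sqr_ge0 v1; have s2 := sqr_ge0 v2.
have e0 : v0^+2 = 0 by lra.
have e1 : v1^+2 = 0 by lra.
have e2 : v2^+2 = 0 by lra.
move/eqP: e0; move/eqP: e1; move/eqP: e2; rewrite !expf_eq0 /= => /eqP -> /eqP -> /eqP ->.
by [].
Qed.

Lemma lgDl x y z : lg c (x + y) z = lg c x z + lg c y z.
Proof. rewrite !lg_coord !mxE; ring. Qed.
Lemma lgDr x y z : lg c z (x + y) = lg c z x + lg c z y.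
Proof. rewrite !lg_coord !mxE; ring. Qed.
Lemma lgBl x y z : lg c (x - y) z = lg c x z - lg c y z.
Proof. rewrite !lg_coord !mxE; ring. Qed.
Lemma lgBr x y z : lg c z (x - y) = lg c z x - lg c z y.
Proof. rewrite !lg_coord !mxE; ring. Qed.
Lemma lgNl x z : lg c (- x) z = - lg c x z.
Proof. rewrite !lg_coord !mxE; ring. Qed.
Lemma lgNr x z : lg c z (- x) = - lg c z x.
Proof. rewrite !lg_coord !mxE; ring. Qed.
Lemma lgZl a x z : lg c (a *: x) z = a * lg c x z.
Proof. rewrite !lg_coord !mxE; ring. Qed.
Lemma lgZr a x z : lg c z (a *: x) = a * lg c z x.
Proof. rewrite !lg_coord !mxE; ring. Qed.
Lemma lg0l z : lg c 0 z = 0.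
Proof. rewrite !lg_coord !mxE; ring. Qed.
Lemma lg0r z : lg c z 0 = 0.
Proof. rewrite !lg_coord !mxE; ring. Qed.
Lemma lg_sym x y : lg c x y = lg c y x.
Proof. rewrite !lg_coord; ring. Qed.

Lemma lg_mul (L : 'M[R]_4) x y : L^T *m G *m L = G -> lg c (L *m x) (L *m y) = lg c x y.
Proof.
move=> H; rewrite /lg.
transitivity ((x^T *m (L^T *m G *m L) *m y) 0 0); first by rewrite !mulmxA trmx_mul.
by rewrite H.
Qed.

Lemma entry_delta (A : 'M[R]_4) i j : A i j = ((delta_mx i 0 : vec)^T *m A *m (delta_mx j 0 : vec)) 0 0.
Proof. by rewrite trmx_delta -rowE -colE !mxE. Qed.

Lemma preserve_mx (L : 'M[R]_4) : (forall x y, lg c (L *m x) (L *m y) = lg c x y) ->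
  L^T *m G *m L = G.
Proof.
move=> H; apply/matrixP => i j.
rewrite entry_delta [in RHS]entry_delta -[RHS]/(lg c _ _) -H /lg trmx_mul !mulmxA.
done.
Qed.

Definition refl (a : vec) : 'M[R]_4 := 1%:M - (2 / lg c a a) *: (a *m (a^T *m G)).

Lemma refl_mul a x : refl a *m x = x - (2 * lg c a x / lg c a a) *: a.
Proof.
rewrite /refl mulmxBl mul1mx -scalemxAl -mulmxA.
rewrite [a^T *m G *m x]mx11_scalar mul_mx_scalar -/(lg c a x) scalerA.
congr (_ - _ *: _); rewrite mulrC mulrA; congr (_ * _); by rewrite mulrC.
Qed.

Lemma refl_pres a x y : lg c a a != 0 -> lg c (refl a *m x) (refl a *m y) = lg c x y.
Proof.
move=> ha; rewrite !refl_mul !(lgBl, lgBr, lgZl, lgZr) (lg_sym x a) ?(lg_sym y a).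
field; done.
Qed.

Lemma det_refl a : lg c a a != 0 -> \det (refl a) = -1.
Proof.
move=> ha.
have -> : refl a = 1%:M + a *m ((- (2 / lg c a a)) *: (a^T *m G)).
  by rewrite /refl -scalemxAr scaleNr.
rewrite det_rank1 -scalemxAl mxE -/(lg c a a) mulNr divfK //.
rewrite (_ : 2 = 1 + 1 :> R) //; ring.
Qed.

Lemma refl_pm a : lg c a a != 0 -> (refl a)^T *m G *m refl a = G.
Proof. by move=> ha; apply: preserve_mx => x y; apply: refl_pres. Qed.

Lemma vec_eq0 (v : vec) : v i0 0 = 0 -> v i1 0 = 0 -> v i2 0 = 0 -> v i3 0 = 0 -> v = 0.
Proof.
move=> h0 h1 h2 h3; apply/matrixP => i j; rewrite (ord1 j) mxE.
case: i => [[|[|[|[|k]]]] hi] //.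
- by rewrite -h0; congr (v _ _); apply/val_inj.
- by rewrite -h1; congr (v _ _); apply/val_inj.
- by rewrite -h2; congr (v _ _); apply/val_inj.
- by rewrite -h3; congr (v _ _); apply/val_inj.
Qed.

Lemma posdef (u v : vec) : 0 < c -> lg c u u < 0 -> lg c v u = 0 -> lg c v v <= 0 -> v = 0.
Proof.
move=> hc hu hvu hvv; rewrite !lg_coord in hu hvu hvv.
have [h0 [h1 [h2 h3]]] := @posdef_scalar c _ _ _ _ _ _ _ _ hc hu hvu hvv.
exact: vec_eq0.
Qed.
Arguments posdef {u v}.

Lemma orthochronous (L : 'M[R]_4) (u : vec) : 0 < c -> lg c u u < 0 ->
  L^T *m G *m L = G -> L *m u = u -> 0 < L ord_max ord_max.
Proof.
move=> hc hu hL hLu.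
have -> : (ord_max : 'I_4) = i3 by apply/val_inj.
pose e3 : vec := delta_mx i3 0.
have ha : lg c (L *m e3) (L *m e3) = - c^+2.
  rewrite lg_mul // lg_coord !mxE /=; ring.
have hau : lg c (L *m e3) u = - c^+2 * u i3 0.
  have := @lg_mul L e3 u hL; rewrite hLu => ->; rewrite lg_coord !mxE /=; ring.
have -> : L i3 i3 = (L *m e3) i3 0 by rewrite -colE mxE.
rewrite !lg_coord in ha hau hu.
exact: (@orth_scalar c _ _ _ _ _ _ _ _ hc ha hu hau).
Qed.
Arguments orthochronous {L u}.

Lemma orth_exists (a b : vec) : exists n : vec, n != 0 /\ lg c n a = 0 /\ lg c n b = 0.
Proof.
pose M : 'M[R]_(4, 1 + 1) := row_mx (G *m a) (G *m b).
have hr : (\rank (kermx M) > 0)%N.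
  rewrite mxrank_ker; have := rank_leq_col M; rewrite /=; lia.
have [i hi] : exists i, row i (kermx M) != 0.
  apply/existsP; apply: contraTT hr => /existsPn h.
  rewrite -leqNgt leqn0 mxrank_eq0; apply/eqP/matrixP => i j.
  move: (h i); rewrite negbK => /eqP/matrixP/(_ 0 j); rewrite !mxE.
  by [].
exists (row i (kermx M))^T; split; first by rewrite trmx_eq0.
have : row i (kermx M) *m M = 0 by rewrite -row_mul mulmx_ker row0.
rewrite mul_mx_row => /eqP; rewrite -row_mx0 => /eqP /eq_row_mx [h1 h2].
by rewrite /lg trmxK -!mulmxA h1 h2 !mxE.
Qed.

Lemma posdef_lt (u v : vec) : 0 < c -> lg c u u < 0 -> lg c v u = 0 -> v != 0 -> 0 < lg c v v.
Proof.
move=> hc hu hvu hv; rewrite ltNge; apply/negP => hle.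
by move: hv; rewrite (posdef hc hu hvu hle) eqxx.
Qed.
Arguments posdef_lt {u v}.

Lemma posdef_ge (u v : vec) : 0 < c -> lg c u u < 0 -> lg c v u = 0 -> 0 <= lg c v v.
Proof.
move=> hc hu hvu; have [->|hv] := eqVneq v 0; first by rewrite lg0l.
exact/ltW/(posdef_lt hc hu hvu hv).
Qed.
Arguments posdef_ge {u v}.

Lemma rot_exists (u v0 y : vec) : 0 < c -> lg c u u < 0 -> lg c v0 u = 0 ->
  lg c y u = 0 -> lg c y y = lg c v0 v0 -> y != v0 ->
  exists L, stabH c u L /\ L *m v0 = y.
Proof.
move=> hc hu hv0 hy hyy hne.
pose a := v0 - y.
have hau : lg c a u = 0 by rewrite /a lgBl hv0 hy subrr.
have ha0 : a != 0 by rewrite /a subr_eq0 eq_sym.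
have haa := posdef_lt hc hu hau ha0.
have [n [hn0 [hnu hny]]] := orth_exists u y.
have hnn := posdef_lt hc hu hnu hn0.
have haa' : lg c a a != 0 by rewrite gt_eqF.
have hnn' : lg c n n != 0 by rewrite gt_eqF.
pose L := refl n *m refl a.
have hLp : L^T *m G *m L = G.
  apply: preserve_mx => x z; rewrite /L -!mulmxA !refl_pres //.
have hLu : L *m u = u.
  rewrite /L -mulmxA !refl_mul hau !(mulr0, mul0r, scale0r, subr0) hnu.
  by rewrite !(mulr0, mul0r, scale0r, subr0).
exists L; split; last first.
  rewrite /L -mulmxA [refl a *m v0]refl_mul.
  have -> : 2 * lg c a v0 / lg c a a = 1.
    have e1 : lg c a v0 = lg c v0 v0 - lg c y v0 by rewrite /a lgBl.
    have e2 : lg c a a = 2 * (lg c v0 v0 - lg c y v0).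
      rewrite /a !(lgBl, lgBr) (lg_sym v0 y) hyy; ring.
    rewrite e2 e1 in haa' *; apply: divff; exact: haa'.
  rewrite scale1r /a opprB addrC subrK refl_mul hny.
  by rewrite !(mulr0, mul0r, scale0r, subr0).
split=> //; split=> //; split.
  by rewrite /L det_mulmx !det_refl // mulrNN mulr1.
exact: (orthochronous hc hu hLp hLu).
Qed.
Arguments rot_exists {u v0 y}.

Lemma all_perp (u w : vec) (T : vec -> Prop) : 0 < c -> lg c u u < 0 ->
  T 0 -> (forall x y, T x -> T y -> T (x - y)) ->
  (forall L z, stabH c u L -> T z -> T (L *m z)) ->
  T w -> ~ (exists t, w = t *: u) ->
  forall t, lg c t u = 0 -> T t.
Proof.
move=> hc hu hT0 hTB hTL hw hnw.
have hTD : forall x y, T x -> T y -> T (x + y).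
  move=> x y hx hy; have := hTB _ _ hx (hTB _ _ hT0 hy).
  by rewrite sub0r opprK.
have huu : lg c u u != 0 by rewrite lt_eqF.
pose h0 := lg c w u / lg c u u.
pose v0 := w - h0 *: u.
have hv0u : lg c v0 u = 0 by rewrite /v0 lgBl lgZl /h0 divfK // subrr.
have hv00 : v0 != 0.
  apply/negP => /eqP h; apply: hnw; exists h0; by move/eqP: h; rewrite subr_eq0 => /eqP.
have hr := posdef_lt hc hu hv0u hv00.
set r2 := lg c v0 v0 in hr.
have hw' : w = v0 + h0 *: u by rewrite /v0 subrK.
have sph : forall y, lg c y u = 0 -> lg c y y = r2 -> T (y - v0).
  move=> y hyu hyy; have [->|hne] := eqVneq y v0; first by rewrite subrr.
  have [L [hL hLv]] := rot_exists hc hu hv0u hyu hyy hne.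
  have := hTB _ _ (hTL _ _ hL hw) hw.
  have -> : L *m w - w = y - v0; last by [].
  rewrite hw' mulmxDr -scalemxAr hLv; case: hL => _ ->.
  apply/matrixP => i j; rewrite !mxE; ring.
have ball : forall t, lg c t u = 0 -> lg c t t <= 4 * r2 -> T t.
  move=> t htu htt.
  have [n [hn0 [hnu hnt]]] := orth_exists u t.
  have hnn := posdef_lt hc hu hnu hn0.
  have htt0 := posdef_ge hc hu htu.
  pose k := Num.sqrt ((r2 - lg c t t / 4) / lg c n n).
  have hk : k ^+ 2 * lg c n n = r2 - lg c t t / 4.
    rewrite sqr_sqrtr ?divfK //; first by rewrite gt_eqF.
    rewrite divr_ge0 //; last exact: ltW.
    by rewrite subr_ge0 ler_pdivrMr // mulrC.
  pose y1 := 2^-1 *: t + k *: n.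
  pose y2 := - 2^-1 *: t + k *: n.
  have h1u : lg c y1 u = 0 by rewrite /y1 lgDl !lgZl htu hnu; ring.
  have h2u : lg c y2 u = 0 by rewrite /y2 lgDl !lgZl htu hnu; ring.
  have hnt' : lg c t n = 0 by rewrite lg_sym.
  have h1y : lg c y1 y1 = r2.
    rewrite /y1 !(lgDl, lgDr, lgZl, lgZr) hnt hnt'.
    by rewrite -[r2](subrK (lg c t t / 4)) -hk; field.
  have h2y : lg c y2 y2 = r2.
    rewrite /y2 !(lgDl, lgDr, lgZl, lgZr) hnt hnt'.
    by rewrite -[r2](subrK (lg c t t / 4)) -hk; field.
  have := hTB _ _ (sph _ h1u h1y) (sph _ h2u h2y).
  have -> : y1 - v0 - (y2 - v0) = t; last by [].
  rewrite /y1 /y2; apply/matrixP => i j; rewrite !mxE; by field.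
have mult : forall (m : nat) z, T z -> T (m%:R *: z).
  move=> m z hz; elim: m => [|m IH]; first by rewrite scale0r.
  have -> : m.+1%:R *: z = m%:R *: z + z; last by apply: hTD.
  by rewrite -natr1 scalerDl scale1r.
move=> t htu.
have htt0 := posdef_ge hc hu htu.
have hq : 0 <= lg c t t / (4 * r2) by rewrite divr_ge0 // ?ltW // mulr_gt0.
have hb := archi_boundP hq.
set m := Num.bound _ in hb.
have hM : 1 <= m.+1%:R :> R by rewrite ler1n.
have hM0 : m.+1%:R != 0 :> R by rewrite pnatr_eq0.
have -> : t = m.+1%:R *: (m.+1%:R^-1 *: t) by rewrite scalerA divff // scale1r.
apply: mult; apply: ball; first by rewrite lgZl htu mulr0.
rewrite lgZl lgZr mulrA.
rewrite -natr1 in hM hb hM0 *.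
set M := m%:R + 1 in hM hb hM0 *.
rewrite -(ler_pM2l (_ : 0 < M * M)); last by apply: mulr_gt0; lra.
have -> : M * M * (M^-1 / M * lg c t t) = lg c t t by field.
have h4 : 0 < 4 * r2 by lra.
rewrite ltr_pdivrMr in hb; last by rewrite mulr_gt0.
have e1 : m%:R * (4 * r2) <= M * (4 * r2) by rewrite ler_pM2r // /M lerDl.
have e2 : M * (4 * r2) <= M * M * (4 * r2) by rewrite ler_pM2r // ler_peMr //; lra.
lra.
Qed.

Lemma vecE (x y : vec) : (forall i, x i 0 = y i 0) -> x = y.
Proof. by move=> h; apply/matrixP => i j; rewrite (ord1 j). Qed.

Lemma stab1 u : stabH c u 1%:M.
Proof.
split; last by rewrite mul1mx.
split; first by rewrite trmx1 mul1mx mulmx1.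
by rewrite det1 mxE eqxx.
Qed.

Lemma PX_transl u b : PX c u (fun x => x + b).
Proof. exists 1%:M; split; first exact: stab1. by exists b => x; rewrite mul1mx. Qed.

Lemma PX_lin u L : stabH c u L -> PX c u (fun x => L *m x).
Proof. move=> hL; exists L; split=> //; by exists 0 => x; rewrite addr0. Qed.

Lemma partA (u : vec) : 0 < c -> lg c u u < 0 ->
  forall E : vec -> vec -> Prop, is_equivalence E ->
     (invariant_rel (PX c u) E <->
      exists H : R -> Prop, additive_subgroup H /\
        ((forall x y, E x y <-> exists h, H h /\ y = x + h *: u) \/
         (forall x y, E x y <->
            exists v h, lg c v u = 0 /\ H h /\ y = x + (v + h *: u)))).
Proof.
move=> hc hu E [Erefl [Esym Etrans]]; split.
- move=> inv.
  pose T z := E 0 z.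
  have tr : forall x y b, E x y -> E (x + b) (y + b).
    by move=> x y b; apply: (inv _ (PX_transl u b)).
  have ET : forall x y, E x y <-> T (y - x).
    move=> x y; split.
    + by move=> h; have := tr _ _ (- x) h; rewrite subrr.
    + by move=> h; have := tr _ _ x h; rewrite add0r subrK.
  have hT0 : T 0 by apply: Erefl.
  have hTB : forall x y, T x -> T y -> T (x - y).
    move=> x y hx hy; apply/(ET y x); exact: (Etrans _ _ _ (Esym _ _ hy) hx).
  have hTD : forall x y, T x -> T y -> T (x + y).
    move=> x y hx hy; have := hTB _ _ hx (hTB _ _ hT0 hy).
    by rewrite sub0r opprK.
  have hTL : forall L z, stabH c u L -> T z -> T (L *m z).
    move=> L z hL hz; have := inv _ (@PX_lin u L hL) _ _ hz; by rewrite mulmx0.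
  exists (fun h => T (h *: u)); split.
    split; first by rewrite scale0r.
    by move=> a b ha hb; rewrite scalerBl; apply: hTB.
  case: (classic (exists w, T w /\ ~ (exists t, w = t *: u))).
  + move=> [w [hw hnw]]; right.
    have P := @all_perp u w T hc hu hT0 hTB hTL hw hnw.
    move=> x y; split.
    * move=> /ET hxy.
      pose h := lg c (y - x) u / lg c u u.
      exists (y - x - h *: u), h; split.
        rewrite lgBl lgZl /h divfK ?subrr //; by rewrite lt_eqF.
      split; last by apply: vecE => i; rewrite !mxE; ring.
      have hv : lg c (y - x - h *: u) u = 0.
        rewrite lgBl lgZl /h divfK ?subrr //; by rewrite lt_eqF.
      have := hTB _ _ hxy (P (y - x - h *: u) hv).
      by have -> : y - x - (y - x - h *: u) = h *: u by apply: vecE => i; rewrite !mxE; ring.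
    * move=> [v [h [hv [hh ->]]]]; apply/ET.
      have -> : x + (v + h *: u) - x = v + h *: u by apply: vecE => i; rewrite !mxE; ring.
      by apply: hTD => //; apply: P.
  + move=> hno; left => x y; split.
    * move=> /ET hxy.
      have [t ht] : exists t, y - x = t *: u.
        apply: NNPP => hn; apply: hno; by exists (y - x).
      exists t; split; first by rewrite -ht.
      by apply: vecE => i; move/matrixP: ht => /(_ i 0); rewrite !mxE => <-; ring.
    * move=> [h [hh ->]]; apply/ET.
      by have -> : x + h *: u - x = h *: u by apply: vecE => i; rewrite !mxE; ring.
- move=> [H [hH [hi|hii]]] f [L [[hLp hLu] [b hf]]] x y.
  + move/hi => [h [hh ->]]; apply/hi; exists h; split=> //.
    rewrite !hf mulmxDr -scalemxAr hLu; apply: vecE => i; rewrite !mxE; ring.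
  + move/hii => [v [h [hv [hh ->]]]]; apply/hii; exists (L *m v), h; split.
      by case: hLp => hG _; have := @lg_mul L v u hG; rewrite hLu => ->.
    split=> //.
    rewrite !hf !mulmxDr -scalemxAr hLu; apply: vecE => i; rewrite !mxE; ring.
Qed.

Lemma H_dich (H : R -> Prop) : additive_subgroup H ->
  (forall mu h, 0 < mu -> H h -> H (mu * h)) ->
  (forall h, H h -> h = 0) \/ (forall h, H h).
Proof.
move=> [H0 HB] HZ.
case: (classic (exists h0, H h0 /\ h0 <> 0)).
- move=> [h0 [hh0 hn]]; right => t.
  have hn' : h0 != 0 by apply/eqP.
  case: (ltrgt0P (t / h0)) => hs.
  + by have := HZ _ _ hs hh0; rewrite divfK.
  + have hs' : 0 < - (t / h0) by rewrite oppr_gt0.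
    have := HB _ _ H0 (HZ _ _ hs' hh0).
    by rewrite mulNr divfK // sub0r opprK.
  + by move/eqP: hs; rewrite mulf_eq0 invr_eq0 (negbTE hn') orbF => /eqP ->.
- move=> hno; left => h hh; apply: NNPP => hn; apply: hno; by exists h.
Qed.

Lemma lg_scaleL mu (L : 'M[R]_4) x y : L^T *m G *m L = G ->
  lg c ((mu *: L) *m x) ((mu *: L) *m y) = mu ^+ 2 * lg c x y.
Proof. by move=> h; rewrite -!scalemxAl lgZl lgZr lg_mul // expr2 mulrA. Qed.

Lemma partB (u : vec) : 0 < c -> lg c u u < 0 ->
  forall E : vec -> vec -> Prop, is_equivalence E ->
     ((invariant_rel (CPX c u) E /\ ~ trivial_rel E /\ ~ worldline_rel u E) <->
      (forall x y, E x y <-> synchrony c u x y)).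
Proof.
move=> hc hu E hE.
have huu : lg c u u != 0 by rewrite lt_eqF.
have [n [hn0 [hnu _]]] := orth_exists u u.
split.
- move=> [inv [ntriv nwl]].
  have invP : invariant_rel (PX c u) E.
    move=> f [L [[hLp hLu] [b hf]]]; apply: inv; exists L; split; last by exists b.
    split; first by exists 1; split=> //; exists L; split=> //; rewrite scale1r.
    move=> y; split.
      by move=> [v [[t ->] ->]]; exists t; rewrite -scalemxAr hLu.
    by move=> [t ->]; exists (t *: u); split; [exists t | rewrite -scalemxAr hLu].
  have [H [hH hcase]] := (proj1 (@partA u hc hu E hE)) invP.
  have scal : forall mu x y, 0 < mu -> E x y -> E (mu *: x) (mu *: y).
    move=> mu x y hmu hxy.
    have hmu0 : mu != 0 by rewrite gt_eqF.
    have := inv (fun z => (mu *: 1%:M) *m z + 0) _ x y hxy.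
    rewrite !addr0 -!scalemxAl !mul1mx; apply.
    exists (mu *: 1%:M); split; last by exists 0.
    split; first by exists mu; split=> //; exists 1%:M; split=> //; apply: (stab1 u).1.
    move=> y0; split.
      by move=> [v [[t ->] ->]]; exists (mu * t); rewrite -scalemxAl mul1mx scalerA.
    move=> [t ->]; exists ((t / mu) *: u); split; first by exists (t / mu).
    by rewrite -scalemxAl mul1mx scalerA mulrC divfK.
  have HZ : forall mu h, 0 < mu -> H h -> H (mu * h).
    move=> mu h hmu hh.
    case: hcase => hc'.
    + have : E 0 (h *: u) by apply/hc'; exists h; rewrite add0r.
      move/(scal _ _ _ hmu); rewrite scaler0 scalerA => /hc' [h' [hh' he]].
      have : lg c ((mu * h) *: u) u = lg c (0 + h' *: u) u by rewrite he.
      rewrite add0r !lgZl => /mulIf -> //.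
    + have : E 0 (h *: u) by apply/hc'; exists 0, h; rewrite lg0l !add0r.
      move/(scal _ _ _ hmu); rewrite scaler0 scalerA => /hc' [v [h' [hv [hh' he]]]].
      have : lg c ((mu * h) *: u) u = lg c (0 + (v + h' *: u)) u by rewrite he.
      rewrite add0r lgDl hv add0r !lgZl => /mulIf -> //.
  have [H0|Hall] := @H_dich H hH HZ.
  + case: hcase => hc'.
    * exfalso; apply: ntriv; right => x y; split.
        by move/hc' => [h [/H0 -> ->]]; rewrite scale0r addr0.
      by move=> ->; apply/hc'; exists 0; split; [case: hH | rewrite scale0r addr0].
    * move=> x y; split.
        move/hc' => [v [h [hv [/H0 -> ->]]]]; rewrite /synchrony.
        by rewrite scale0r addr0 opprD addrA subrr add0r lgNl hv oppr0.
      rewrite /synchrony => hs; apply/hc'; exists (y - x), 0; split.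
        by rewrite -opprB lgNl hs oppr0.
      split; first by case: hH.
      by rewrite scale0r addr0 addrC subrK.
  + case: hcase => hc'.
    * exfalso; apply: nwl => x y; split.
        by move/hc' => [h [_ ->]]; exists h.
      by move=> [t ->]; apply/hc'; exists t.
    * exfalso; apply: ntriv; left => x y; apply/hc'.
      pose h := lg c (y - x) u / lg c u u.
      exists (y - x - h *: u), h; split.
        by rewrite lgBl lgZl /h divfK ?subrr.
      split=> //; apply: vecE => i; rewrite !mxE; ring.
- move=> hs; split; last split.
  + move=> f [M [[[mu [hmu [L [hLp hM]]]] hCH] [b hf]]] x y.
    rewrite !hs /synchrony !hf => hxy.
    have [lam hlam] : span_line u (M *m u).
      by apply/hCH; exists u; split=> //; exists 1; rewrite scale1r.
    have hLG := hLp.1.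
    have hlam0 : lam != 0.
      apply/negP => /eqP h0; move: hlam; rewrite h0 scale0r => hMu.
      have := @lg_scaleL mu L u u hLG; rewrite -hM hMu lg0l => /esym/eqP.
      by rewrite mulf_eq0 (negbTE huu) orbF expf_eq0 /= gt_eqF.
    have e : M *m x + b - (M *m y + b) = M *m (x - y).
      by rewrite mulmxBr; apply: vecE => i; rewrite !mxE; ring.
    rewrite e; apply: (mulfI hlam0); rewrite mulr0 -lgZr -hlam hM lg_scaleL //.
    by rewrite hxy mulr0.
  + move=> [htot|hid].
    * have := htot 0 u; rewrite hs /synchrony sub0r lgNl => /eqP.
      by rewrite oppr_eq0 (negbTE huu).
    * have : E 0 n by rewrite hs /synchrony sub0r lgNl hnu oppr0.
      by move/hid => h0; move: hn0; rewrite -h0 eqxx.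
  + move=> hw.
    have : E 0 n by rewrite hs /synchrony sub0r lgNl hnu oppr0.
    move/hw => [t]; rewrite add0r => ht.
    move: hnu; rewrite ht lgZl => /eqP; rewrite mulf_eq0 (negbTE huu) orbF => /eqP t0.
    by move: hn0; rewrite ht t0 scale0r eqxx.
Qed.
End S.

Theorem theorem3p17 (R : realType) (c : R) (hc : 0 < c) (u : 'cV[R]_4)
    (hu : timelike c u) :
  (forall E : 'cV[R]_4 -> 'cV[R]_4 -> Prop, is_equivalence E ->
     (invariant_rel (PX c u) E <->
      exists H : R -> Prop, additive_subgroup H /\
        ((forall x y, E x y <-> exists h, H h /\ y = x + h *: u) \/
         (forall x y, E x y <->
            exists v h, lg c v u = 0 /\ H h /\ y = x + (v + h *: u))))) /\
  (forall E : 'cV[R]_4 -> 'cV[R]_4 -> Prop, is_equivalence E ->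
     ((invariant_rel (CPX c u) E /\ ~ trivial_rel E /\ ~ worldline_rel u E) <->
      (forall x y, E x y <-> synchrony c u x y))).
Proof.
split; [exact: partA | exact: partB].
Qed.
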